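(* In the affine Schur category $\mathcal{AS}$ over a commutative ring $\Bbbk$, for all integers $a,b\ge 1$ and all $u\in\Bbbk$ the following equalities of morphisms hold: $$(X_{a,b}\otimes 1_u)\circ(1_a\otimes D_{u,b})\circ(D_{u,a}\otimes 1_b)=(1_b\otimes D_{u,a})\circ(D_{u,b}\otimes 1_a)\circ(1_u\otimes X_{a,b})\quad\text{as morphisms }(u,a,b)\to(b,a,u),$$ $$(1_u\otimes X_{a,b})\circ(U_{a,u}\otimes 1_b)\circ(1_a\otimes U_{b,u})=(U_{b,u}\otimes 1_a)\circ(1_b\otimes U_{a,u})\circ(X_{a,b}\otimes 1_u)\quad\text{as morphisms }(a,b,u)\to(u,b,a).$$
   Context: Let $\Bbbk$ be a commutative ring with $1$. The affine Schur category $\mathcal{AS}$ is the strict $\Bbbk$-linear monoidal category defined as follows. Generating objects: the integers $a\ge1$ (black strands of thickness $a$) and the elements $u\in\Bbbk$ (red strands labelled $u$); objects are finite words in these, tensor product being concatenation, written $(x_1,\dots,x_k)$ or $x_1\otimes\cdots\otimes x_k$. Generating morphisms, for $a,b\ge1$, $u\in\Bbbk$: merge $M_{a,b}:(a,b)\to(a+b)$, split $S_{a,b}:(a+b)\to(a,b)$, crossing $X_{a,b}:(a,b)\to(b,a)$, dot $\omega_a:(a)\to(a)$, traverse-up $U_{a,u}:(a,u)\to(u,a)$, traverse-down $D_{u,a}:(u,a)\to(a,u)$. Conventions: a black strand of thickness $0$ is the unit object and any merge, split or crossing involving a thickness-$0$ strand is an identity; $1_x$ is an identity. Derived morphisms: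 $\omega_{a,0}:=1_a$; $\omega_{a,r}:=M_{r,a-r}\circ(\omega_r\otimes1_{a-r})\circ S_{r,a-r}$ for $1\le r\le a$ (so $\omega_{a,a}=\omega_a$); $\omega_{a,r}:=0$ if $r<0$ or $r>a$; $S^{(a)}:(a)\to(1,\dots,1)$ and $M^{(a)}:(1,\dots,1)\to(a)$ are iterated splits/merges; $g_r(u):=\sum_{i=0}^{r}(-1)^i\big(\prod_{j=0}^{i-1}(u+j)\big)\omega_{r,r-i}\in\mathrm{End}(r)$. Defining relations, for all $a,b,c,d,r\ge1$, $u\in\Bbbk$: (R1) $M_{a+b,c}(M_{a,b}\otimes1_c)=M_{a,b+c}(1_a\otimes M_{b,c})$, $(S_{a,b}\otimes1_c)S_{a+b,c}=(1_a\otimes S_{b,c})S_{a,b+c}$; (R2) if $a+c=b+d$: $S_{b,d}M_{a,c}=\sum(M_{s,c-t}\otimes M_{a-s,t})(1_s\otimes X_{a-s,c-t}\otimes1_t)(S_{s,a-s}\otimes S_{c-t,t})$ over $0\le s\le\min(a,b)$, $0\le t\le\min(c,d)$, $t-s=d-a$; (R3) $M_{a,b}S_{a,b}=\binom{a+b}{a}1_{a+b}$; (R4) $(\omega_b\otimes1_a)X_{a,b}=\sum_{t=0}^{\min(a,b)}t!\,(M_{t,b-t}\otimes M_{a-t,t})(1_t\otimes X_{a-t,b-t}\otimes1_t)(1_t\otimes1_{a-t}\otimes\omega_{b-t}\otimes1_t)(S_{t,a-t}\otimes S_{b-t,t})$ and $X_{b,a}(\omega_b\otimes1_a)=\sum_{t=0}^{\min(a,b)}t!\,(M_{t,a-t}\otimes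 M_{b-t,t})(1_t\otimes1_{a-t}\otimes\omega_{b-t}\otimes1_t)(1_t\otimes X_{b-t,a-t}\otimes1_t)(S_{t,b-t}\otimes S_{a-t,t})$; (R5) $S_{a,b}\omega_{a+b}=(\omega_a\otimes\omega_b)S_{a,b}$, $\omega_{a+b}M_{a,b}=M_{a,b}(\omega_a\otimes\omega_b)$; (R6) $M^{(a)}(\omega_1\otimes\cdots\otimes\omega_1)S^{(a)}=a!\,\omega_a$; (R7) $D_{u,r}U_{r,u}=g_r(u)\otimes1_u$, $U_{r,u}D_{u,r}=1_u\otimes g_r(u)$; (R8) $(D_{u,b}\otimes1_a)(1_u\otimes X_{a,b})(U_{a,u}\otimes1_b)=(1_b\otimes U_{a,u})(X_{a,b}\otimes1_u)(1_a\otimes D_{u,b})+\sum_{t=1}^{\min(a,b)}t!\,(M_{t,b-t}\otimes1_u\otimes M_{a-t,t})(1_t\otimes1_{b-t}\otimes U_{a-t,u}\otimes1_t)(1_t\otimes X_{a-t,b-t}\otimes1_u\otimes1_t)(1_t\otimes1_{a-t}\otimes D_{u,b-t}\otimes1_t)(S_{t,a-t}\otimes1_u\otimes S_{b-t,t})$; (R9) $(1_u\otimes S_{b,c})U_{b+c,u}=(U_{b,u}\otimes1_c)(1_b\otimes U_{c,u})(S_{b,c}\otimes1_u)$, $(S_{a,b}\otimes1_u)D_{u,a+b}=(1_a\otimes D_{u,b})(D_{u,a}\otimes1_b)(1_u\otimes S_{a,b})$, $D_{u,b+c}(1_u\otimes M_{b,c})=(M_{b,c}\otimes1_u)(1_b\otimes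 D_{u,c})(D_{u,b}\otimes1_c)$, $U_{a+b,u}(M_{a,b}\otimes1_u)=(1_u\otimes M_{a,b})(U_{a,u}\otimes1_b)(1_a\otimes U_{b,u})$. *)

(* Defs.v *)
(* Morphisms are formal
   (untyped) terms with computed source/target; the hom-sets of AS are the
   well-typed terms modulo the congruence [eqm] generated by the axioms of a
   strict k-linear monoidal category and the defining relations (R1)-(R9). *)
From HB Require Import structures.
From mathcomp Require Import all_boot all_algebra.
Set Implicit Arguments. Unset Strict Implicit. Unset Printing Implicit Defensive.
Import GRing.Theory.
Local Open Scope ring_scope.

Section AffineSchur.
Variable K : comPzRingType.

(* generating objects: black strands of thickness a (a >= 1) and red strands u *)
Inductive gob : Type := Blk of nat | Red of K.

(* object word of a black strand of thickness a; thickness 0 = unit object *)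
Definition blk (a : nat) : seq gob := if a is 0%N then [::] else [:: Blk a].

Inductive mor : Type :=
  | Id of seq gob
  | Comp of mor & mor            (* Comp f g = f \circ g *)
  | Tens of mor & mor
  | Merge of nat & nat
  | Split of nat & nat
  | Cross of nat & nat
  | Dot of nat
  | Up of nat & K
  | Down of K & nat
  | Zero of seq gob & seq gob
  | Add of mor & mor
  | Scal of K & mor.

Fixpoint src (f : mor) : seq gob :=
  match f with
  | Id x => x
  | Comp f g => src g
  | Tens f g => src f ++ src g
  | Merge a b => blk a ++ blk b
  | Split a b => blk (a + b)
  | Cross a b => blk a ++ blk b
  | Dot a => blk a
  | Up a u => blk a ++ [:: Red u]
  | Down u a => [:: Red u] ++ blk a
  | Zero x _ => x
  | Add f _ => src f
  | Scal _ f => src f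
  end.

Fixpoint tgt (f : mor) : seq gob :=
  match f with
  | Id x => x
  | Comp f g => tgt f
  | Tens f g => tgt f ++ tgt g
  | Merge a b => blk (a + b)
  | Split a b => blk a ++ blk b
  | Cross a b => blk b ++ blk a
  | Dot a => blk a
  | Up a u => [:: Red u] ++ blk a
  | Down u a => blk a ++ [:: Red u]
  | Zero _ y => y
  | Add f _ => tgt f
  | Scal _ f => tgt f
  end.

Fixpoint wt (f : mor) : Prop :=
  match f with
  | Comp f g => [/\ wt f, wt g & src f = tgt g]
  | Tens f g => wt f /\ wt g
  | Add f g => [/\ wt f, wt g, src f = src g & tgt f = tgt g]
  | Scal _ f => wt f
  | _ => True
  end.

Definition idb (a : nat) : mor := Id (blk a).
Definition idr (u : K) : mor := Id [:: Red u].

Definition msum (x y : seq gob) (fs : seq mor) : mor := foldr Add (Zero x y) fs.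

Definition omega2 (a r : nat) : mor :=
  if r is 0%N then idb a
  else if (a < r)%N then Zero (blk a) (blk a)
  else Comp (Merge r (a - r)) (Comp (Tens (Dot r) (idb (a - r))) (Split r (a - r))).

Fixpoint Sfull (a : nat) : mor :=
  if a is n.+1 then Comp (Tens (idb 1) (Sfull n)) (Split 1 n) else Id [::].
Fixpoint Mfull (a : nat) : mor :=
  if a is n.+1 then Comp (Merge 1 n) (Tens (idb 1) (Mfull n)) else Id [::].
Fixpoint dots1 (a : nat) : mor :=
  if a is n.+1 then Tens (Dot 1) (dots1 n) else Id [::].

Definition gpoly (r : nat) (u : K) : mor :=
  msum (blk r) (blk r)
    [seq Scal ((-1) ^+ i * \prod_(j < i) (u + j%:R)) (omega2 r (r - i)) | i <- iota 0 r.+1].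

Definition comp3 (f g h : mor) : mor := Comp f (Comp g h).
Definition comp4 (f g h k : mor) : mor := Comp f (Comp g (Comp h k)).
Definition comp5 (f g h k l : mor) : mor := Comp f (Comp g (Comp h (Comp k l))).
Definition tens3 (f g h : mor) : mor := Tens f (Tens g h).
Definition tens4 (f g h k : mor) : mor := Tens f (Tens g (Tens h k)).

Definition R2rhs (a b c d : nat) : mor :=
  msum (blk a ++ blk c) (blk b ++ blk d)
    [seq comp3 (Tens (Merge st.1 (c - st.2)) (Merge (a - st.1) st.2))
               (tens3 (idb st.1) (Cross (a - st.1) (c - st.2)) (idb st.2))
               (Tens (Split st.1 (a - st.1)) (Split (c - st.2) st.2))
     | st <- [seq (s, t) | s <- iota 0 (minn a b).+1, t <- iota 0 (minn c d).+1]
     & (st.2 + a == d + st.1)%N].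

Definition R4rhs1 (a b : nat) : mor :=
  msum (blk a ++ blk b) (blk b ++ blk a)
    [seq Scal (t`!)%:R
       (comp4 (Tens (Merge t (b - t)) (Merge (a - t) t))
              (tens3 (idb t) (Cross (a - t) (b - t)) (idb t))
              (tens4 (idb t) (idb (a - t)) (Dot (b - t)) (idb t))
              (Tens (Split t (a - t)) (Split (b - t) t)))
     | t <- iota 0 (minn a b).+1].

Definition R4rhs2 (a b : nat) : mor :=
  msum (blk b ++ blk a) (blk a ++ blk b)
    [seq Scal (t`!)%:R
       (comp4 (Tens (Merge t (a - t)) (Merge (b - t) t))
              (tens4 (idb t) (idb (a - t)) (Dot (b - t)) (idb t))
              (tens3 (idb t) (Cross (b - t) (a - t)) (idb t))
              (Tens (Split t (b - t)) (Split (a - t) t)))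
     | t <- iota 0 (minn a b).+1].

Definition R8lhs (a b : nat) (u : K) : mor :=
  comp3 (Tens (Down u b) (idb a)) (Tens (idr u) (Cross a b)) (Tens (Up a u) (idb b)).

Definition R8rhs (a b : nat) (u : K) : mor :=
  Add (comp3 (Tens (idb b) (Up a u)) (Tens (Cross a b) (idr u)) (Tens (idb a) (Down u b)))
   (msum (blk a ++ [:: Red u] ++ blk b) (blk b ++ [:: Red u] ++ blk a)
    [seq Scal (t`!)%:R
       (comp5 (tens3 (Merge t (b - t)) (idr u) (Merge (a - t) t))
              (tens4 (idb t) (idb (b - t)) (Up (a - t) u) (idb t))
              (tens4 (idb t) (Cross (a - t) (b - t)) (idr u) (idb t))
              (tens4 (idb t) (idb (a - t)) (Down u (b - t)) (idb t))
              (tens3 (Split t (a - t)) (idr u) (Split (b - t) t)))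
     | t <- iota 1 (minn a b)]).

Reserved Notation "f =m g" (at level 70).

Inductive eqm : mor -> mor -> Prop :=
  | eqm_refl f : wt f -> f =m f
  | eqm_sym f g : f =m g -> g =m f
  | eqm_trans f g h : f =m g -> g =m h -> f =m h
  | eqm_comp f f' g g' : f =m f' -> g =m g' -> src f = tgt g -> Comp f g =m Comp f' g'
  | eqm_tens f f' g g' : f =m f' -> g =m g' -> Tens f g =m Tens f' g'
  | eqm_add f f' g g' : f =m f' -> g =m g' -> src f = src g -> tgt f = tgt g ->
      Add f g =m Add f' g'
  | eqm_scal c f f' : f =m f' -> Scal c f =m Scal c f'
  | cat_idl f : wt f -> Comp (Id (tgt f)) f =m f
  | cat_idr f : wt f -> Comp f (Id (src f)) =m f
  | cat_assoc f g h : wt f -> wt g -> wt h -> src f = tgt g -> src g = tgt h ->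
      Comp (Comp f g) h =m Comp f (Comp g h)
  | mon_id x y : Tens (Id x) (Id y) =m Id (x ++ y)
  | mon_unitl f : wt f -> Tens (Id [::]) f =m f
  | mon_unitr f : wt f -> Tens f (Id [::]) =m f
  | mon_assoc f g h : wt f -> wt g -> wt h -> Tens (Tens f g) h =m Tens f (Tens g h)
  | mon_interchange f g f' g' : wt f -> wt g -> wt f' -> wt g' ->
      src f = tgt g -> src f' = tgt g' ->
      Tens (Comp f g) (Comp f' g') =m Comp (Tens f f') (Tens g g')
  | lin_addA f g h : wt (Add f (Add g h)) -> Add f (Add g h) =m Add (Add f g) h
  | lin_addC f g : wt (Add f g) -> Add f g =m Add g f
  | lin_add0 f : wt f -> Add f (Zero (src f) (tgt f)) =m f
  | lin_scal0 f : wt f -> Scal 0 f =m Zero (src f) (tgt f)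
  | lin_scal1 f : wt f -> Scal 1 f =m f
  | lin_scalM c d f : wt f -> Scal (c * d) f =m Scal c (Scal d f)
  | lin_scalDl c d f : wt f -> Scal (c + d) f =m Add (Scal c f) (Scal d f)
  | lin_scalDr c f g : wt (Add f g) -> Scal c (Add f g) =m Add (Scal c f) (Scal c g)
  | lin_compDl f g h : wt (Comp (Add f g) h) -> Comp (Add f g) h =m Add (Comp f h) (Comp g h)
  | lin_compDr f g h : wt (Comp h (Add f g)) -> Comp h (Add f g) =m Add (Comp h f) (Comp h g)
  | lin_compZl c f g : wt (Comp f g) -> Comp (Scal c f) g =m Scal c (Comp f g)
  | lin_compZr c f g : wt (Comp f g) -> Comp f (Scal c g) =m Scal c (Comp f g)
  | lin_tensDl f g h : wt (Tens (Add f g) h) -> Tens (Add f g) h =m Add (Tens f h) (Tens g h)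
  | lin_tensDr f g h : wt (Tens h (Add f g)) -> Tens h (Add f g) =m Add (Tens h f) (Tens h g)
  | lin_tensZl c f g : wt (Tens f g) -> Tens (Scal c f) g =m Scal c (Tens f g)
  | lin_tensZr c f g : wt (Tens f g) -> Tens f (Scal c g) =m Scal c (Tens f g)
  | conv_merge0l b : Merge 0 b =m idb b
  | conv_merge0r a : Merge a 0 =m idb a
  | conv_split0l b : Split 0 b =m idb b
  | conv_split0r a : Split a 0 =m idb a
  | conv_cross0l b : Cross 0 b =m idb b
  | conv_cross0r a : Cross a 0 =m idb a
  | conv_dot0 : Dot 0 =m Id [::]
  | conv_up0 u : Up 0 u =m idr u
  | conv_down0 u : Down u 0 =m idr u
  | R1m a b c : (0 < a)%N -> (0 < b)%N -> (0 < c)%N ->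
      Comp (Merge (a + b) c) (Tens (Merge a b) (idb c)) =m
      Comp (Merge a (b + c)) (Tens (idb a) (Merge b c))
  | R1s a b c : (0 < a)%N -> (0 < b)%N -> (0 < c)%N ->
      Comp (Tens (Split a b) (idb c)) (Split (a + b) c) =m
      Comp (Tens (idb a) (Split b c)) (Split a (b + c))
  | R2 a b c d : (0 < a)%N -> (0 < b)%N -> (0 < c)%N -> (0 < d)%N -> (a + c = b + d)%N ->
      Comp (Split b d) (Merge a c) =m R2rhs a b c d
  | R3 a b : (0 < a)%N -> (0 < b)%N ->
      Comp (Merge a b) (Split a b) =m Scal ('C(a + b, a))%:R (idb (a + b))
  | R4a a b : (0 < a)%N -> (0 < b)%N ->
      Comp (Tens (Dot b) (idb a)) (Cross a b) =m R4rhs1 a b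
  | R4b a b : (0 < a)%N -> (0 < b)%N ->
      Comp (Cross b a) (Tens (Dot b) (idb a)) =m R4rhs2 a b
  | R5s a b : (0 < a)%N -> (0 < b)%N ->
      Comp (Split a b) (Dot (a + b)) =m Comp (Tens (Dot a) (Dot b)) (Split a b)
  | R5m a b : (0 < a)%N -> (0 < b)%N ->
      Comp (Dot (a + b)) (Merge a b) =m Comp (Merge a b) (Tens (Dot a) (Dot b))
  | R6 a : (0 < a)%N ->
      comp3 (Mfull a) (dots1 a) (Sfull a) =m Scal (a`!)%:R (Dot a)
  | R7a r u : (0 < r)%N -> Comp (Down u r) (Up r u) =m Tens (gpoly r u) (idr u)
  | R7b r u : (0 < r)%N -> Comp (Up r u) (Down u r) =m Tens (idr u) (gpoly r u)
  | R8 a b u : (0 < a)%N -> (0 < b)%N -> R8lhs a b u =m R8rhs a b u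
  | R9a b c u : (0 < b)%N -> (0 < c)%N ->
      Comp (Tens (idr u) (Split b c)) (Up (b + c) u) =m
      comp3 (Tens (Up b u) (idb c)) (Tens (idb b) (Up c u)) (Tens (Split b c) (idr u))
  | R9b a b u : (0 < a)%N -> (0 < b)%N ->
      Comp (Tens (Split a b) (idr u)) (Down u (a + b)) =m
      comp3 (Tens (idb a) (Down u b)) (Tens (Down u a) (idb b)) (Tens (idr u) (Split a b))
  | R9c b c u : (0 < b)%N -> (0 < c)%N ->
      Comp (Down u (b + c)) (Tens (idr u) (Merge b c)) =m
      comp3 (Tens (Merge b c) (idr u)) (Tens (idb b) (Down u c)) (Tens (Down u b) (idb c))
  | R9d a b u : (0 < a)%N -> (0 < b)%N ->
      Comp (Up (a + b) u) (Tens (Merge a b) (idr u)) =m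
      comp3 (Tens (idr u) (Merge a b)) (Tens (Up a u) (idb b)) (Tens (idb a) (Up b u))
where "f =m g" := (eqm f g).

End AffineSchur.

Arguments Id {K}. Arguments Merge {K}. Arguments Split {K}. Arguments Cross {K}.
Arguments Dot {K}. Arguments Zero {K}. Arguments idb {K}. Arguments Sfull {K}.
Arguments Mfull {K}. Arguments dots1 {K}. Arguments omega2 {K}.
Arguments R2rhs {K}. Arguments R4rhs1 {K}. Arguments R4rhs2 {K}.

(* Main.v *)
Require Import Defs.
From mathcomp Require Import all_boot all_algebra.
From mathcomp Require Import zify.
Set Implicit Arguments. Unset Strict Implicit. Unset Printing Implicit Defensive.

Notation "f =m g" := (eqm f g) (at level 70).

Section S.
Variable K : comPzRingType.
Implicit Types (f g h : mor K) (x y : seq (gob K)).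

Ltac lsolve := repeat split; rewrite ?cats0 -?catA //;
  try (congr (blk _ _ ++ blk _ _); lia); try (congr (blk _ _); lia);
  try (repeat f_equal; lia).

Definition ty f x y := [/\ wt f, src f = x & tgt f = y].

Lemma ty_msum (T : eqType) x y (F : T -> mor K) s :
  (forall i, i \in s -> ty (F i) x y) -> ty (msum x y (map F s)) x y.
Proof.
elim: s => [|i s IH] H /=; first by split.
have [w1 s1 t1] := H i (mem_head _ _).
have [w2 s2 t2] := IH (fun j js => H j (mem_behead (s:=i::s) js)).
rewrite /msum /= -/(msum x y _) in w2 s2 t2 *.
by split=> //=; split; rewrite ?s1 ?s2 ?t1 ?t2.
Qed.


Lemma ty_omega2 r k : ty (omega2 r k : mor K) (blk K r) (blk K r).
Proof.
rewrite /omega2; case: k => [|k]; first by [].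
case: ltnP => H; first by [].
by split => //=; rewrite subnKC //; case: r H.
Qed.

Lemma ty_gpoly r (u : K) : ty (gpoly r u) (blk K r) (blk K r).
Proof.
apply: ty_msum => i _; have [w s t] := ty_omega2 r (r - i).
by split.
Qed.

Lemma ty_Sfull a : ty (Sfull a : mor K) (blk K a) (nseq a (Blk K 1)).
Proof. elim: a => [|a [w s t]] //=; split => //=; rewrite ?s ?t //; by case: a {w s t}. Qed.

Lemma ty_Mfull a : ty (Mfull a : mor K) (nseq a (Blk K 1)) (blk K a).
Proof. elim: a => [|a [w s t]] //=; split => //=; rewrite ?s ?t //; by case: a {w s t}. Qed.

Lemma ty_dots1 a : ty (dots1 a : mor K) (nseq a (Blk K 1)) (nseq a (Blk K 1)).
Proof. elim: a => [|a [w s t]] //=; split => //=; rewrite ?s ?t //. Qed.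


Lemma ty_R2rhs a b c d : (a + c = b + d)%N ->
  ty (R2rhs a b c d : mor K) (blk K a ++ blk K c) (blk K b ++ blk K d).
Proof.
move=> Hac; rewrite /R2rhs; apply: ty_msum => -[s t].
rewrite mem_filter => /andP[/eqP E H].
case: (allpairsP H) => -[s' t'] [Hs Ht [Es Et]] {H}; subst s t.
move: E Hs Ht; rewrite !mem_iota /= !add0n !ltnS => E Hs Ht.
by split => /=; lsolve.
Qed.

Lemma ty_R4rhs1 a b : ty (R4rhs1 a b : mor K) (blk K a ++ blk K b) (blk K b ++ blk K a).
Proof.
rewrite /R4rhs1; apply: ty_msum => t; rewrite mem_iota /= add0n ltnS => Ht.
by split => /=; lsolve.
Qed.

Lemma ty_R4rhs2 a b : ty (R4rhs2 a b : mor K) (blk K b ++ blk K a) (blk K a ++ blk K b).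
Proof.
rewrite /R4rhs2; apply: ty_msum => t; rewrite mem_iota /= add0n ltnS => Ht.
by split => /=; lsolve.
Qed.

Lemma ty_R8rhs a b (u : K) :
  ty (R8rhs a b u) (blk K a ++ [:: Red u] ++ blk K b) (blk K b ++ [:: Red u] ++ blk K a).
Proof.
rewrite /R8rhs; match goal with |- context[msum ?x ?y ?L] =>
  have [w s t] : ty (msum x y L) x y end.
  apply: ty_msum => t; rewrite mem_iota => /andP[Ht1 Ht].
  by split => /=; lsolve.
split => /=; rewrite ?s ?t //; lsolve.
Qed.

Arguments R2rhs : simpl never.
Arguments R4rhs1 : simpl never.
Arguments R4rhs2 : simpl never.
Arguments R8rhs : simpl never.
Arguments gpoly : simpl never.
Arguments Mfull : simpl never.
Arguments Sfull : simpl never.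
Arguments dots1 : simpl never.

Ltac tyf :=
  try (match goal with |- context[R2rhs ?a ?b ?c ?d] => let Hw := fresh "Hw" in let Hs := fresh "Hs" in let Ht := fresh "Ht" in move: (@ty_R2rhs a b c d ltac:(assumption)) => [Hw Hs Ht]; rewrite ?Hs ?Ht end);
  try (match goal with |- context[R4rhs1 ?a ?b] => let Hw := fresh "Hw" in let Hs := fresh "Hs" in let Ht := fresh "Ht" in move: (@ty_R4rhs1 a b) => [Hw Hs Ht]; rewrite ?Hs ?Ht end);
  try (match goal with |- context[R4rhs2 ?a ?b] => let Hw := fresh "Hw" in let Hs := fresh "Hs" in let Ht := fresh "Ht" in move: (@ty_R4rhs2 a b) => [Hw Hs Ht]; rewrite ?Hs ?Ht end);
  try (match goal with |- context[R8rhs ?a ?b ?u] => let Hw := fresh "Hw" in let Hs := fresh "Hs" in let Ht := fresh "Ht" in move: (@ty_R8rhs a b u) => [Hw Hs Ht]; rewrite ?Hs ?Ht end);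
  try (match goal with |- context[gpoly ?a ?u] => let Hw := fresh "Hw" in let Hs := fresh "Hs" in let Ht := fresh "Ht" in move: (@ty_gpoly a u) => [Hw Hs Ht]; rewrite ?Hs ?Ht end);
  try (match goal with |- context[Mfull ?a] => let Hw := fresh "Hw" in let Hs := fresh "Hs" in let Ht := fresh "Ht" in move: (@ty_Mfull a) => [Hw Hs Ht]; rewrite ?Hs ?Ht end);
  try (match goal with |- context[Sfull ?a] => let Hw := fresh "Hw" in let Hs := fresh "Hs" in let Ht := fresh "Ht" in move: (@ty_Sfull a) => [Hw Hs Ht]; rewrite ?Hs ?Ht end);
  try (match goal with |- context[dots1 ?a] => let Hw := fresh "Hw" in let Hs := fresh "Hs" in let Ht := fresh "Ht" in move: (@ty_dots1 a) => [Hw Hs Ht]; rewrite ?Hs ?Ht end);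
  idtac.

Lemma eqm_ty f g : f =m g -> [/\ wt f, wt g, src f = src g & tgt f = tgt g].
Proof.
elim; clear; intros; tyf;
  repeat (simpl in *; match goal with H : [/\ _, _, _ & _] |- _ => destruct H
     | H : [/\ _, _ & _] |- _ => destruct H | H : _ /\ _ |- _ => destruct H end);
  simpl in *; repeat split; try done; try congruence;
  rewrite ?cats0 -?catA ?addn0 ?addnA //; try congruence.
Qed.
Lemma eqm_wtl f g : f =m g -> wt f. Proof. by case/eqm_ty. Qed.
Lemma eqm_wtr f g : f =m g -> wt g. Proof. by case/eqm_ty. Qed.
Lemma eqm_src f g : f =m g -> src f = src g. Proof. by case/eqm_ty. Qed.
Lemma eqm_tgt f g : f =m g -> tgt f = tgt g. Proof. by case/eqm_ty. Qed.

Lemma cL f f' g : f =m f' -> wt g -> src f = tgt g -> Comp f g =m Comp f' g.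
Proof. by move=> H w e; apply: eqm_comp => //; apply: eqm_refl. Qed.
Lemma cR f g g' : g =m g' -> wt f -> src f = tgt g -> Comp f g =m Comp f g'.
Proof. by move=> H w e; apply: eqm_comp => //; apply: eqm_refl. Qed.
Lemma tL f f' g : f =m f' -> wt g -> Tens f g =m Tens f' g.
Proof. by move=> H w; apply: eqm_tens => //; apply: eqm_refl. Qed.
Lemma tR f g g' : g =m g' -> wt f -> Tens f g =m Tens f g'.
Proof. by move=> H w; apply: eqm_tens => //; apply: eqm_refl. Qed.

Definition To (o : bool) f g := if o then Tens f g else Tens g f.
Definition catr (o : bool) x y := if o then x ++ y else y ++ x.
Definition ow (o : bool) (x : seq (gob K)) := if o then x else rev x.

Lemma toL o f f' g : f =m f' -> wt g -> To o f g =m To o f' g.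
Proof. by case: o => H w /=; [apply: tL | apply: tR]. Qed.
Lemma toR o f g g' : g =m g' -> wt f -> To o f g =m To o f g'.
Proof. by case: o => H w /=; [apply: tR | apply: tL]. Qed.
Lemma toI o f g f' g' : wt f -> wt g -> wt f' -> wt g' -> src f = tgt g -> src f' = tgt g' ->
  To o (Comp f g) (Comp f' g') =m Comp (To o f f') (To o g g').
Proof. by case: o => *; apply: mon_interchange. Qed.
Lemma toA o f g h : wt f -> wt g -> wt h -> To o (To o f g) h =m To o f (To o g h).
Proof. by case: o => * /=; [apply: mon_assoc | apply: eqm_sym; apply: mon_assoc]. Qed.
Lemma toId o x y : To o (Id x) (Id y) =m Id (catr o x y :> seq (gob K)).
Proof. by case: o; apply: mon_id. Qed.
Lemma toU o f : wt f -> To o (Id [::]) f =m f.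
Proof. by case: o => w; [apply: mon_unitl | apply: mon_unitr]. Qed.
Lemma toDl o f g h : wt (Add f g) -> wt h -> To o (Add f g) h =m Add (To o f h) (To o g h).
Proof. by case: o => w1 w2; [apply: lin_tensDl | apply: lin_tensDr] => /=. Qed.
Lemma toDr o f g h : wt (Add f g) -> wt h -> To o h (Add f g) =m Add (To o h f) (To o h g).
Proof. by case: o => w1 w2; [apply: lin_tensDr | apply: lin_tensDl] => /=. Qed.
Lemma toZl o c f g : wt f -> wt g -> To o (Scal c f) g =m Scal c (To o f g).
Proof. by case: o => w1 w2; [apply: lin_tensZl | apply: lin_tensZr] => /=. Qed.
Lemma toZr o c f g : wt f -> wt g -> To o f (Scal c g) =m Scal c (To o f g).
Proof. by case: o => w1 w2; [apply: lin_tensZr | apply: lin_tensZl] => /=. Qed.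

Lemma idI x : Id x =m Comp (Id x) (Id x).
Proof. by apply: eqm_sym; apply: (cat_idl (f := Id x)). Qed.

Lemma addN f : wt f -> Add f (Scal (-1)%R f) =m Zero (src f) (tgt f).
Proof.
move=> w; apply: (eqm_trans (g := Add (Scal 1%R f) (Scal (-1)%R f))).
  by apply: eqm_add => //; [apply: eqm_sym; apply: lin_scal1 | apply: eqm_refl].
apply: (eqm_trans (g := Scal (1 + -1)%R f)); first by apply: eqm_sym; apply: lin_scalDl.
by rewrite GRing.subrr; apply: lin_scal0.
Qed.

Lemma zero_idem f : wt f -> f =m Add f f -> f =m Zero (src f) (tgt f).
Proof.
move=> w H.
have wN : wt (Scal (-1)%R f) by [].
apply: (eqm_trans (g := Add f (Zero (src f) (tgt f)))); first by apply: eqm_sym; apply: lin_add0.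
apply: (eqm_trans (g := Add f (Add f (Scal (-1)%R f)))).
  by apply: eqm_add => //; [apply: eqm_refl | apply: eqm_sym; apply: addN].
apply: (eqm_trans (g := Add (Add f f) (Scal (-1)%R f))); first by apply: lin_addA.
apply: (eqm_trans (g := Add f (Scal (-1)%R f))); last by apply: addN.
have [_ _ e1 e2] := eqm_ty H.
apply: eqm_add => //; [by apply: eqm_sym | by apply: eqm_refl].
Qed.

Lemma cancel_add f g : wt f -> wt g -> src f = src g -> tgt f = tgt g ->
  f =m Add (Add f g) (Scal (-1)%R g).
Proof.
move=> wf wg es et; apply: eqm_sym.
apply: (eqm_trans (g := Add f (Add g (Scal (-1)%R g)))).
  by apply: eqm_sym; apply: lin_addA.
apply: (eqm_trans (g := Add f (Zero (src f) (tgt f)))); last by apply: lin_add0.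
apply: eqm_add => //; first by apply: eqm_refl.
by rewrite es et; apply: addN.
Qed.

Lemma zeroI x y : Zero x y =m Add (Zero x y) (Zero x y :> mor K).
Proof. by apply: eqm_sym; apply: (lin_add0 (f := Zero x y)). Qed.

Lemma comp_zl x y g : wt g -> x = tgt g -> Comp (Zero x y) g =m Zero (src g) y.
Proof.
move=> w e.
have := zero_idem (f := Comp (Zero x y) g); apply => //.
apply: (eqm_trans (g := Comp (Add (Zero x y) (Zero x y)) g)).
  by apply: cL => //; apply: zeroI.
by apply: lin_compDl.
Qed.

Lemma comp_zr x y f : wt f -> src f = y -> Comp f (Zero x y) =m Zero x (tgt f).
Proof.
move=> w e.
have := zero_idem (f := Comp f (Zero x y)); apply => //.
apply: (eqm_trans (g := Comp f (Add (Zero x y) (Zero x y)))).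
  by apply: cR => //; apply: zeroI.
by apply: lin_compDr.
Qed.

Lemma to_zl o x y g : wt g -> To o (Zero x y) g =m Zero (catr o x (src g)) (catr o y (tgt g)).
Proof.
move=> w.
have := zero_idem (f := To o (Zero x y) g); case: o => //=; apply => //.
  apply: (eqm_trans (g := Tens (Add (Zero x y) (Zero x y)) g)).
    by apply: tL => //; apply: zeroI.
  by apply: lin_tensDl.
apply: (eqm_trans (g := Tens g (Add (Zero x y) (Zero x y)))).
  by apply: tR => //; apply: zeroI.
by apply: lin_tensDr.
Qed.

Variable u : K.

Definition bw (x : seq (gob K)) := all (fun c : gob K => if c is Blk a then (0 < a)%N else false) x.
Definition G o (c : gob K) : mor K :=
  match c with Blk a => if o then Down u a else Up a u | Red _ => Zero [::] [::] end.
Fixpoint Sr o (l : seq (gob K)) : mor K :=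
  match l with
  | [::] => idr u
  | g :: l' => Comp (To o (Id [:: g]) (Sr o l')) (To o (G o g) (Id (ow o l')))
  end.
Definition St o x := Sr o (ow o x).

Ltac tys :=
  repeat match goal with o : bool |- _ => destruct o end;
  unfold To, ow, catr in *; simpl in *;
  repeat split; simpl;
  repeat (match goal with H : src ?X = _ |- context[src ?X] => rewrite H
                        | H : tgt ?X = _ |- context[tgt ?X] => rewrite H end);
  try assumption; rewrite ?rev_cat ?rev_cons -?cats1 -?catA ?cats0 /= -?catA //.

Lemma ty_G o (c : gob K) : bw [:: c] -> ty (G o c) (catr o [:: Red u] [:: c]) (catr o [:: c] [:: Red u]).
Proof. by case: c => // -[|a] //; case: o. Qed.

Lemma ty_Sr o l : bw l -> ty (Sr o l) (catr o [:: Red u] (ow o l)) (catr o (ow o l) [:: Red u]).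
Proof.
elim: l => [|c l IH] /=; first by case: o.
move/andP=> [hg hl]; have [w1 s1 t1] := IH hl.
have [w2 s2 t2] := @ty_G o c ltac:(by rewrite /= hg).
tys.
Qed.


Lemma ty_St o x : bw x -> ty (St o x) (catr o [:: Red u] x) (catr o x [:: Red u]).
Proof.
move=> h; rewrite /St.
have h' : bw (ow o x) by case: o; rewrite /ow /bw ?all_rev.
move: h'; case: o => h'; have := ty_Sr _ h'; by rewrite /ow ?revK.
Qed.

Tactic Notation "stp" tactic3(t) := eapply eqm_trans; [ t | ].
Tactic Notation "ax" open_constr(l) := (eapply l; solve [tys]).
Tactic Notation "axs" open_constr(l) := (eapply eqm_sym; eapply l; solve [tys]).
Tactic Notation "cl" tactic3(t) := (eapply cL; [ t | solve [tys].. ]).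
Tactic Notation "cr" tactic3(t) := (eapply cR; [ t | solve [tys].. ]).
Tactic Notation "tl" tactic3(t) := (first [eapply toL | eapply tL]; [ t | solve [tys].. ]).
Tactic Notation "tr" tactic3(t) := (first [eapply toR | eapply tR]; [ t | solve [tys].. ]).

Lemma Sr_cat o l1 l2 : bw l1 -> bw l2 ->
  Sr o (l1 ++ l2) =m Comp (To o (Id (ow o l1)) (Sr o l2)) (To o (Sr o l1) (Id (ow o l2))).
Proof.
move=> h1 h2; have [w2 s2 t2] := ty_Sr o h2.
elim: l1 h1 => [|c l1 IH] h1 /=.
  have -> : ow o [::] = [::] by destruct o.
  apply: eqm_sym.
  stp (cl (ax toU)).
  stp (cr (ax toId)).
  have -> : catr o [:: Red u] (ow o l2) = src (Sr o l2) by rewrite s2.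
  by ax cat_idr.
move/andP: h1 => [hc hl]; have IH' := IH hl.
have [w1 s1 t1] := ty_Sr o hl.
have [w3 s3 t3] := @ty_G o c ltac:(by rewrite /= hc).
have -> : ow o (c :: l1) = catr o [:: c] (ow o l1) by destruct o; rewrite /ow /catr ?rev_cons ?cats1.
have -> : ow o (l1 ++ l2) = catr o (ow o l1) (ow o l2) by destruct o; rewrite /ow /catr ?rev_cat.
have [w4 s4 t4] := ty_Sr o (l := l1 ++ l2) ltac:(by rewrite /bw all_cat; apply/andP; split).
stp (cl (tr (ax IH'))).
stp (cl (tl (ax idI))).
stp (cl (ax toI)).
stp (ax cat_assoc).
stp (cl (axs toA)).
stp (cl (tl (ax toId))).
stp (cr (cl (axs toA))).
stp (cr (cr (tr (axs toId)))).
stp (cr (cr (axs toA))).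
apply: eqm_sym.
stp (cr (tr (ax idI))).
stp (cr (ax toI)).
ax eqm_refl.
Qed.


Lemma cat_idr' f x : wt f -> src f = x -> Comp f (Id x) =m f.
Proof. by move=> w <-; apply: cat_idr. Qed.
Lemma cat_idl' f x : wt f -> tgt f = x -> Comp (Id x) f =m f.
Proof. by move=> w <-; apply: cat_idl. Qed.

Lemma to_zr o x y f : wt f -> To o f (Zero x y) =m Zero (catr o (src f) x) (catr o (tgt f) y).
Proof. by case: o => w; have := @to_zl (~~ true) x y f w; [|have := @to_zl true x y f w]. Qed.

Lemma St_cat o x y : bw x -> bw y ->
  St o (catr o x y) =m Comp (To o (Id x) (St o y)) (To o (St o x) (Id y)).
Proof.
move=> hx hy; rewrite /St.
have -> : ow o (catr o x y) = ow o x ++ ow o y by destruct o; rewrite /ow /catr ?rev_cat.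
have owK z : ow o (ow o z) = z by destruct o; rewrite /ow ?revK.
have bo z : bw z -> bw (ow o z) by destruct o; rewrite /ow /bw ?all_rev.
by have := Sr_cat o (bo _ hx) (bo _ hy); rewrite !owK.
Qed.

Definition Pass o f x y := [/\ ty f x y, bw x, bw y &
  Comp (To o f (idr u)) (St o x) =m Comp (St o y) (To o (idr u) f)].

Lemma Pass_eqm o f g x y : f =m g -> Pass o f x y -> Pass o g x y.
Proof.
move=> H [[wf sf tf] bx byy E]; have [_ wg es et] := eqm_ty H.
have sg : src g = x by rewrite -es.
have tg : tgt g = y by rewrite -et.
have [w1 s1 t1] := ty_St o bx; have [w2 s2 t2] := ty_St o byy.
split => //.
stp (cl (tl (axs H))).
stp (ax E).
cr (tr (ax H)).
Qed.

Lemma Pass_id o x : bw x -> Pass o (Id x) x x.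
Proof.
move=> bx; have [w1 s1 t1] := ty_St o bx.
split => //.
stp (cl (ax toId)).
have e1 : catr o x [:: Red u] = tgt (St o x) by rewrite t1.
have e2 : catr o [:: Red u] x = src (St o x) by rewrite s1.
rewrite e1; stp (ax cat_idl).
apply: eqm_sym.
stp (cr (ax toId)).
rewrite e2; ax cat_idr.
Qed.

Lemma Pass_comp o f g x y z : Pass o f y z -> Pass o g x y -> Pass o (Comp f g) x z.
Proof.
move=> [[wf sf tf] by1 bz Ef] [[wg sg tg] bx _ Eg].
have [w1 s1 t1] := ty_St o bx; have [w2 s2 t2] := ty_St o by1; have [w3 s3 t3] := ty_St o bz.
split => //; first by split => //=; rewrite sf tg.
stp (cl (tr (ax idI))).
stp (cl (ax toI)).
stp (ax cat_assoc).
stp (cr (ax Eg)).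
stp (axs cat_assoc).
stp (cl (ax Ef)).
stp (ax cat_assoc).
stp (cr (axs toI)).
stp (cr (tl (axs idI))).
ax eqm_refl.
Qed.


Lemma Pass_to o f g x y x' y' : Pass o f x x' -> Pass o g y y' ->
  Pass o (To o f g) (catr o x y) (catr o x' y').
Proof.
move=> [[wf sf tf] bx bx' Ef] [[wg sg tg] byy by' Eg].
have [w1 s1 t1] := ty_St o bx; have [w2 s2 t2] := ty_St o bx'.
have [w3 s3 t3] := ty_St o byy; have [w4 s4 t4] := ty_St o by'.
have bc z1 z2 : bw z1 -> bw z2 -> bw (catr o z1 z2) by destruct o; rewrite /catr /bw all_cat => -> ->.
have [w5 s5 t5] := ty_St o (bc _ _ bx byy); have [w6 s6 t6] := ty_St o (bc _ _ bx' by').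
split; [ by destruct o; split => //=; rewrite ?sf ?sg ?tf ?tg | by apply: bc | by apply: bc | ].
stp (cr (ax St_cat)).
stp (cl (ax toA)).
stp (axs cat_assoc).
stp (cl (axs toI)).
stp (cl (tl (ax cat_idr'))).
stp (cl (tr (ax Eg))).
stp (cl (tl (axs (@cat_idl' _ x')))).
stp (cl (ax toI)).
stp (ax cat_assoc).
stp (cr (cl (axs toA))).
stp (cr (axs toI)).
stp (cr (tl (ax Ef))).
stp (cr (tr (ax cat_idr'))).
stp (cr (tr (axs (@cat_idl' _ y')))).
stp (cr (ax toI)).
stp (cr (cr (ax toA))).
stp (axs cat_assoc).
stp (cl (axs St_cat)).
ax eqm_refl.
Qed.

Lemma Pass_tens o f g x y x' y' : Pass o f x x' -> Pass o g y y' ->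
  Pass o (Tens f g) (x ++ y) (x' ++ y').
Proof. by case: o => Pf Pg; [apply: (Pass_to Pf Pg) | apply: (Pass_to Pg Pf)]. Qed.

Lemma Pass_add o f g x y : Pass o f x y -> Pass o g x y -> Pass o (Add f g) x y.
Proof.
move=> [[wf sf tf] bx byy Ef] [[wg sg tg] _ _ Eg].
have [w1 s1 t1] := ty_St o bx; have [w2 s2 t2] := ty_St o byy.
split => //; first by split => //=; rewrite sf sg tf tg.
stp (cl (ax toDl)).
stp (ax lin_compDl).
stp (eapply eqm_add; [ax Ef | ax Eg | solve [tys] | solve [tys]]).
stp (axs lin_compDr).
stp (cr (axs toDr)).
ax eqm_refl.
Qed.

Lemma Pass_scal o c f x y : Pass o f x y -> Pass o (Scal c f) x y.
Proof.
move=> [[wf sf tf] bx byy Ef].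
have [w1 s1 t1] := ty_St o bx; have [w2 s2 t2] := ty_St o byy.
split => //.
stp (cl (ax toZl)).
stp (ax lin_compZl).
stp (eapply eqm_scal; ax Ef).
stp (axs lin_compZr).
stp (cr (axs toZr)).
ax eqm_refl.
Qed.

Lemma Pass_zero o x y : bw x -> bw y -> Pass o (Zero x y) x y.
Proof.
move=> bx byy.
have [w1 s1 t1] := ty_St o bx; have [w2 s2 t2] := ty_St o byy.
split => //.
stp (cl (ax to_zl)).
stp (ax comp_zl).
apply: eqm_sym.
stp (cr (ax to_zr)).
stp (ax comp_zr).
rewrite s1 t2 /=; ax eqm_refl.
Qed.

Lemma Pass_msum o (T : eqType) x y (F : T -> mor K) s : bw x -> bw y ->
  (forall i, i \in s -> Pass o (F i) x y) -> Pass o (msum x y (map F s)) x y.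
Proof.
move=> bx byy; elim: s => [|i s IH] H /=; first by apply: Pass_zero.
apply: Pass_add; first by apply: H; rewrite mem_head.
by apply: IH => j js; apply: H; rewrite in_cons js orbT.
Qed.

Lemma Pass_cancel o f g x y : Pass o (Add f g) x y -> Pass o g x y -> ty f x y -> Pass o f x y.
Proof.
move=> Pfg Pg [wf sf tf].
have [[wg sg tg] _ _ _] := Pg.
apply: (Pass_eqm (f := Add (Add f g) (Scal (-1)%R g))).
  by apply: eqm_sym; apply: cancel_add => //; rewrite ?sf ?sg ?tf ?tg.
by apply: Pass_add => //; apply: Pass_scal.
Qed.


Lemma toU' o f : wt f -> To o f (Id [::]) =m f.
Proof. by case: o => w; [apply: mon_unitr | apply: mon_unitl]. Qed.

Lemma Sr1 o c : bw [:: c] -> Sr o [:: c] =m G o c.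
Proof.
move=> h; have [w s t] := ty_G o h; rewrite /=.
have -> : ow o [::] = [::] by destruct o.
stp (cl (ax toId)).
stp (cr (ax toU')).
ax cat_idl'.
Qed.

Lemma Sr2 o c1 c2 : bw [:: c1; c2] ->
  Sr o [:: c1; c2] =m Comp (To o (Id [:: c1]) (G o c2)) (To o (G o c1) (Id [:: c2])).
Proof.
move=> /andP[h1 h2]; have h1' : bw [:: c1] by rewrite /bw /= h1.
have {}h2 : bw [:: c2] by exact: h2.
have [w1 s1 t1] := ty_G o h1'; have [w2 s2 t2] := ty_G o h2.
have [w3 s3 t3] := ty_Sr o h2.
rewrite [Sr o _]/=.
have -> : ow o [:: c2] = [:: c2] by destruct o.
stp (cl (tr (ax (Sr1 o h2)))).
ax eqm_refl.
Qed.

Arguments Sr : simpl never.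

Lemma Pass_merge o a b : Pass o (Merge a b) (blk K a ++ blk K b) (blk K (a + b)).
Proof.
case: a => [|a].
  apply: (Pass_eqm (f := Id (blk K b))); first by apply: eqm_sym; apply: conv_merge0l.
  by apply: Pass_id; case: b.
case: b => [|b].
  apply: (Pass_eqm (f := Id (blk K a.+1))); first by apply: eqm_sym; apply: conv_merge0r.
  by rewrite cats0 addn0; apply: Pass_id.
split => //.
have h1 : bw [:: Blk K a.+1] by []. have h2 : bw [:: Blk K b.+1] by [].
have h3 : bw [:: Blk K (a.+1 + b.+1)] by [].
case: o; rewrite /St /=.
- stp (cr (ax Sr2)).
  
  stp (axs R9c).
  apply: eqm_sym; stp (cl (ax Sr1)).
  ax eqm_refl.
- stp (cr (ax Sr2)).
  stp (axs R9d).
  apply: eqm_sym; stp (cl (ax Sr1)).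
  ax eqm_refl.
Qed.

Lemma Pass_split o a b : Pass o (Defs.Split a b) (blk K (a + b)) (blk K a ++ blk K b).
Proof.
case: a => [|a].
  apply: (Pass_eqm (f := Id (blk K b))); first by apply: eqm_sym; apply: (conv_split0l K).
  by apply: Pass_id; case: b.
case: b => [|b].
  apply: (Pass_eqm (f := Id (blk K a.+1))); first by apply: eqm_sym; apply: conv_split0r.
  by rewrite cats0 addn0; apply: Pass_id.
split => //.
case: o; rewrite /St /=.
- stp (cr (ax Sr1)).
  stp (ax R9b).
  apply: eqm_sym; stp (cl (ax Sr2)).
  stp (ax cat_assoc).
  ax eqm_refl.
- stp (cr (ax Sr1)).
  stp (ax R9a).
  apply: eqm_sym; stp (cl (ax Sr2)).
  stp (ax cat_assoc).
  ax eqm_refl.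
Qed.


Definition R2F (a b : nat) (st : nat * nat) : mor K :=
  comp3 (Tens (Merge st.1 (b - st.2)) (Merge (a - st.1) st.2))
               (tens3 (idb st.1) (Cross (a - st.1) (b - st.2)) (idb st.2))
               (Tens (Defs.Split st.1 (a - st.1)) (Defs.Split (b - st.2) st.2)).

Lemma R2E a b : R2rhs a b b a = Add (R2F a b (0, 0))
  (msum (blk K a ++ blk K b) (blk K b ++ blk K a)
    (map (R2F a b) (filter (fun st => st.2 + a == a + st.1)%N
      ([seq (0, t) | t <- iota 1 (minn b a)] ++
       [seq (s, t) | s <- iota 1 (minn a b), t <- iota 0 (minn b a).+1])))).
Proof.
by rewrite /R2rhs /= addn0 eqxx.
Qed.


Lemma bw_blk a : bw (blk K a). Proof. by case: a. Qed.

Lemma Pass_conv o f x y x' y' : Pass o f x y -> x = x' -> y = y' -> Pass o f x' y'.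
Proof. by move=> ? <- <-. Qed.

Lemma T0E a b : R2F a b (0, 0) =m Cross a b.
Proof.
rewrite /R2F /= !subn0.
stp (cl (tl (ax conv_merge0l))).
stp (cl (tr (ax conv_merge0r))).
stp (cl (ax mon_id)).
stp (cr (cr (tl (ax conv_split0l)))).
stp (cr (cr (tr (ax conv_split0r)))).
stp (cr (cr (ax mon_id))).
stp (cr (cl (ax mon_unitl))).
stp (cr (cl (ax mon_unitr))).
stp (cr (ax cat_idr')).
ax cat_idl'.
Qed.

Lemma Pass_cross o n a b : (a <= n)%N ->
  Pass o (Cross a b) (blk K a ++ blk K b) (blk K b ++ blk K a).
Proof.
elim: n a b => [|n IH] a b Ha.
  have -> : a = 0%N by lia.
  apply: (Pass_eqm (f := Id (blk K b))); first by apply: eqm_sym; apply: conv_cross0l.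
  by apply: Pass_conv (Pass_id o (bw_blk b)) _ _; rewrite //= cats0.
case: (posnP a) => [->|ha].
  apply: (Pass_eqm (f := Id (blk K b))); first by apply: eqm_sym; apply: conv_cross0l.
  by apply: Pass_conv (Pass_id o (bw_blk b)) _ _; rewrite //= cats0.
case: (posnP b) => [->|hb].
  apply: (Pass_eqm (f := Id (blk K a))); first by apply: eqm_sym; apply: conv_cross0r.
  by apply: Pass_conv (Pass_id o (bw_blk a)) _ _; rewrite //= cats0.
have HC : Pass o (Comp (Defs.Split b a) (Merge a b)) (blk K a ++ blk K b) (blk K b ++ blk K a).
  apply: Pass_comp (Pass_split o b a) _.
  by have := Pass_merge o a b; rewrite addnC.
have HR := Pass_eqm (@R2 K a b b a ha hb hb ha (addnC a b)) HC.
rewrite R2E in HR.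
apply: (Pass_eqm (T0E a b)).
apply: (Pass_cancel HR).
  apply: Pass_msum; rewrite ?bw_cat; try by rewrite /bw all_cat -!/(bw _) !bw_blk.
  move=> [s t]; rewrite mem_filter => /andP[/eqP E]; simpl in E.
  rewrite mem_cat => /orP[/mapP[t' Ht' [Es Et]] | HH].
    by move: Ht'; rewrite mem_iota; lia.
  case: (allpairsP HH) => -[s' t'] [Hs Ht [Es Et]] {HH}.
  move: Hs Ht; rewrite !mem_iota /= => Hs Ht; subst s t.
  have Hst : t' = s' by lia.
  subst t'.
  have s1 : (1 <= s')%N by lia.
  have s2 : (s' <= a)%N by lia.
  have s3 : (s' <= b)%N by lia.
  rewrite /R2F /=.
  have PC := Pass_tens (Pass_split o s' (a - s')) (Pass_split o (b - s') s').
  rewrite subnKC // subnK // in PC.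
  have PB := Pass_tens (Pass_id o (bw_blk s'))
     (Pass_tens (IH (a - s') (b - s') ltac:(lia)) (Pass_id o (bw_blk s'))).
  have PA := Pass_tens (Pass_merge o s' (b - s')) (Pass_merge o (a - s') s').
  rewrite subnKC // subnK // in PA.
  set Y := (blk K s' ++ blk K (b - s') ++ blk K (a - s') ++ blk K s').
  apply: (Pass_comp (y := Y)); first by apply: (Pass_conv PA); rewrite /Y -?catA.
  apply: Pass_comp PC; apply: (Pass_conv PB); by rewrite /Y -?catA.
have [w _ e1 e2] := eqm_ty (T0E a b); by split; rewrite ?e1 ?e2.
Qed.


Lemma part1 a b : (0 < a)%N -> (0 < b)%N ->
  comp3 (Tens (Cross a b) (idr u)) (Tens (idb a) (Down u b)) (Tens (Down u a) (idb b)) =m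
  comp3 (Tens (idb b) (Down u a)) (Tens (Down u b) (idb a)) (Tens (idr u) (Cross a b)).
Proof.
case: a => // a; case: b => // b _ _.
have [_ _ _ E] := @Pass_cross true a.+1 a.+1 b.+1 (leqnn _).
rewrite /St /= in E.
stp (cr (axs (@Sr2 true (Blk K a.+1) (Blk K b.+1)))).
stp (ax E).
stp (cl (ax Sr2)).
stp (ax cat_assoc).
ax eqm_refl.
Qed.

Lemma part2 a b : (0 < a)%N -> (0 < b)%N ->
  comp3 (Tens (idr u) (Cross a b)) (Tens (Up a u) (idb b)) (Tens (idb a) (Up b u)) =m
  comp3 (Tens (Up b u) (idb a)) (Tens (idb b) (Up a u)) (Tens (Cross a b) (idr u)).
Proof.
case: a => // a; case: b => // b _ _.
have [_ _ _ E] := @Pass_cross false a.+1 a.+1 b.+1 (leqnn _).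
rewrite /St /= in E.
stp (cr (axs (@Sr2 false (Blk K b.+1) (Blk K a.+1)))).
stp (ax E).
stp (cl (ax Sr2)).
stp (ax cat_assoc).
ax eqm_refl.
Qed.

End S.

Theorem lemma3p4 (K : comPzRingType) (a b : nat) (u : K) :
  (0 < a)%N -> (0 < b)%N ->
  eqm (comp3 (Tens (Cross a b) (idr u)) (Tens (idb a) (Down u b)) (Tens (Down u a) (idb b)))
      (comp3 (Tens (idb b) (Down u a)) (Tens (Down u b) (idb a)) (Tens (idr u) (Cross a b)))
  /\
  eqm (comp3 (Tens (idr u) (Cross a b)) (Tens (Up a u) (idb b)) (Tens (idb a) (Up b u)))
      (comp3 (Tens (Up b u) (idb a)) (Tens (idb b) (Up a u)) (Tens (Cross a b) (idr u))).
Proof. by move=> ha hb; split; [apply: part1 | apply: part2]. Qed.
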